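(* Let $(A,C,k)$ be an instance and $W$ an affordable committee. Let $\overline{W}$ be obtained from $W$ by completion with the maximin support rule. Then $\mathrm{supp}(\overline{W})\ge\frac12\max\{\mathrm{supp}(W'):W'\subseteq C,|W'|=k\}$.
   Context: An instance $(A,C,k)$ consists of a finite nonempty candidate set $C$, voters $N=\{1,\dots,n\}$, approval sets $A_i\subseteq C$, and a committee size $1\le k\le|C|$. A committee is $W\subseteq C$ with $|W|\le k$. For a nonempty committee $W$, its maximin support is $\mathrm{supp}(W)=\min_{\emptyset\ne S\subseteq W}\frac{1}{|S|}|\{i\in N: A_i\cap S\ne\emptyset\}|$. Completion with the maximin support rule repeatedly adds to the current committee $W$ a candidate $c\notin W$ maximizing $\mathrm{supp}(W\cup\{c\})$ (ties arbitrary) until the committee has size $k$. $W$ is affordable if there are $p_i:C\to\mathbb{R}_{\ge0}$ ($i\in N$) with $p_i(c)=0$ for $c\notin A_i$, $\sum_c p_i(c)\le k/n$, $\sum_i p_i(c)=1$ for $c\in W$, $\sum_i p_i(c)=0$ for $c\notin W$. *)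

(* Defs.v *)
From mathcomp Require Import all_boot all_order all_algebra.
Set Implicit Arguments. Unset Strict Implicit. Unset Printing Implicit Defensive.
Import Order.TTheory GRing.Theory Num.Theory.
Local Open Scope ring_scope.

Section ABC.
Variables (R : realFieldType) (C : finType) (n : nat) (A : 'I_n -> {set C}).

Definition napprovers (S : {set C}) : nat :=
  #|[set i : 'I_n | ~~ [disjoint A i & S]]|.

Definition ratio (S : {set C}) : R := (napprovers S)%:R / (#|S|)%:R.

(* maximin support; the minimum ranges over nonempty subsets S of W.
   Only used for nonempty W (value 0 on the empty committee, irrelevant). *)
Definition supp (W : {set C}) : R :=
  if W == set0 then 0
  else \big[Num.min/ratio W]_(S in powerset W | S != set0) ratio S.

(* Wbar is a possible result of completing W with the maximin support rule
   (ties broken arbitrarily) up to size k *)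
Inductive completion (k : nat) : {set C} -> {set C} -> Prop :=
| completion_done (W : {set C}) : #|W| = k -> completion k W W
| completion_step (W : {set C}) (c : C) (Wbar : {set C}) :
    (#|W| < k)%N -> c \notin W ->
    (forall c', c' \notin W -> supp (c' |: W) <= supp (c |: W)) ->
    completion k (c |: W) Wbar -> completion k W Wbar.

Definition affordable (k : nat) (W : {set C}) : Prop :=
  exists p : 'I_n -> C -> R,
    [/\ forall i c, 0 <= p i c,
        forall i c, c \notin A i -> p i c = 0,
        forall i, \sum_(c : C) p i c <= k%:R / n%:R,
        forall c, c \in W -> \sum_(i < n) p i c = 1
      & forall c, c \notin W -> \sum_(i < n) p i c = 0].

(* max { supp(W') : W' ⊆ C, |W'| = k }  (supports are >= 0, so 0 is a safe default) *)
Definition max_supp (k : nat) : R :=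
  \big[Num.max/0]_(W' : {set C} | #|W'| == k) supp W'.

End ABC.

(* Main.v *)
Require Import Defs.
From mathcomp Require Import all_boot all_order all_algebra.
From mathcomp Require Import ring lra zify.
From Stdlib Require Import Classical.
Set Implicit Arguments. Unset Strict Implicit. Unset Printing Implicit Defensive.
Import Order.TTheory GRing.Theory Num.Theory.
Local Open Scope ring_scope.

Section Aux.
Variables (R : realFieldType) (C : finType) (n : nat) (A : 'I_n -> {set C}).

Notation N := (napprovers A).

Lemma N_mono (S T : {set C}) : S \subset T -> (N S <= N T)%N.
Proof.
move=> ST; apply: subset_leq_card; apply/subsetP => i; rewrite !inE.
apply: contra => H; exact: disjointWr ST H.
Qed.

Lemma N_submod (X Y : {set C}) : (N (X :|: Y) + N (X :&: Y) <= N X + N Y)%N.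
Proof.
rewrite /napprovers; apply: leq_trans (eq_leq (cardsUI _ _)); apply: leq_add; apply: subset_leq_card; apply/subsetP => i;
rewrite !inE.
- by rewrite -!setI_eq0 setIUr setU_eq0 negb_and.
- move=> H; apply/andP; split; apply: contra H => H;
  apply: disjointWr H; [exact: subsetIl | exact: subsetIr].
Qed.

Lemma ratio_ge (S : {set C}) (x : R) : S != set0 ->
  (x <= (@Defs.ratio R _ _ A S)) = (x * #|S|%:R <= (N S)%:R).
Proof.
move=> S0; have cS : (0 < #|S|%:R :> R) by rewrite ltr0n card_gt0.
by rewrite /ratio ler_pdivlMr.
Qed.

Lemma ratio_ge0 (S : {set C}) : 0 <= (@Defs.ratio R _ _ A S).
Proof. by rewrite /ratio divr_ge0. Qed.

Definition good (x : R) (X : {set C}) :=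
  forall S : {set C}, S \subset X -> S != set0 -> x * #|S|%:R <= (N S)%:R.

Lemma supp_good (X : {set C}) : X != set0 -> good (supp R A X) X.
Proof.
move=> X0 S SX S0; rewrite -ratio_ge // /supp (negbTE X0).
by apply: bigmin_le_cond; rewrite inE SX.
Qed.

Lemma good_supp (x : R) (X : {set C}) : X != set0 -> good x X -> x <= supp R A X.
Proof.
move=> X0 g; rewrite /supp (negbTE X0); apply: le_bigmin.
  by rewrite ratio_ge // g.
by move=> S /andP [SX S0]; rewrite ratio_ge // g // -powersetE.
Qed.

Lemma supp_ge0 (X : {set C}) : 0 <= supp R A X.
Proof.
case: (eqVneq X set0) => [->|X0]; first by rewrite /supp eqxx.
by apply: good_supp => // S _ _; rewrite mul0r.
Qed.

Lemma good_mono x y X : y <= x -> good x X -> good y X.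
Proof.
move=> yx g S SX S0; apply: le_trans (g S SX S0).
by apply: ler_wpM2r.
Qed.


Lemma N0 : N set0 = 0%N.
Proof.
rewrite /napprovers; apply/eqP; rewrite cards_eq0; apply/eqP/setP => i.
by rewrite !inE -setI_eq0 setI0 eqxx.
Qed.

Lemma good_all x X : good x X -> forall S : {set C}, S \subset X ->
  x * #|S|%:R <= (N S)%:R.
Proof.
move=> g S SX; case: (eqVneq S set0) => [->|S0]; last exact: g.
by rewrite N0 cards0 mulr0.
Qed.

Lemma N_le_n (S : {set C}) : (N S <= n)%N.
Proof. by rewrite /napprovers; apply: leq_trans (max_card _) _; rewrite card_ord. Qed.

Lemma step (x : R) (W Ws : {set C}) : 0 <= x -> good (2 * x) Ws -> good x W ->
  (#|W| < #|Ws|)%N -> exists c, c \notin W /\ good x (c |: W).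
Proof.
move=> x0 gWs gW ltW.
apply: NNPP => Hno.
have bad : forall c, c \notin W -> exists S : {set C},
    [/\ S \subset c |: W, c \in S & (N S)%:R < x * #|S|%:R].
  move=> c cW; apply: NNPP => Hb; apply: Hno; exists c; split => //.
  move=> S SW S0; rewrite leNgt; apply/negP => HS; apply: Hb; exists S; split => //.
  apply: NNPP => cS; have : S \subset W.
    apply/subsetP => y yS; move/subsetP: SW => /(_ y yS); rewrite !inE.
    by case/orP => // /eqP yc; exfalso; apply: cS; rewrite -yc.
  by move/(good_all gW); rewrite leNgt HS.
set D := Ws :\: W.
have claim : forall m (D' : {set C}), #|D'| = m -> D' \subset D -> D' != set0 ->
    exists Z : {set C}, [/\ Z \subset W :|: D', D' \subset Z &
       (N Z)%:R < x * #|Z|%:R].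
  elim=> [|m IH] D' cD' sD' D'0; first by move/eqP: cD'; rewrite cards_eq0 (negbTE D'0).
  case/set0Pn: D'0 => c cin.
  have cW : c \notin W by move/subsetP: sD' => /(_ c cin); rewrite inE => /andP[].
  have [S [SW cS HS]] := bad c cW.
  have SWD : S \subset W :|: D'.
    apply/subsetP => y yS; move/subsetP: SW => /(_ y yS); rewrite !inE.
    by case/orP => [/eqP ->|->]; rewrite ?cin ?orbT.
  case: (eqVneq (D' :\ c) set0) => [D''0|D''0].
    exists S; split => //; apply/subsetP => y yD.
    case: (eqVneq y c) => [-> //|yc].
    have : y \in D' :\ c by rewrite !inE yc yD.
    by rewrite D''0 inE.
  have cD'' : #|D' :\ c| = m by move: cD'; rewrite (cardsD1 c D') cin => -[].
  have sD'' : D' :\ c \subset D by apply: subset_trans sD'; exact: subsetDl.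
  have [Z [ZW DZ HZ]] := IH _ cD'' sD'' D''0.
  exists (Z :|: S); split.
  - rewrite subUset SWD andbT; apply: subset_trans ZW _.
    by apply: setUS; exact: subsetDl.
  - apply/subsetP => y yD; rewrite inE.
    case: (eqVneq y c) => [-> |yc]; first by rewrite cS orbT.
    by move/subsetP: DZ => /(_ y); rewrite !inE yc yD => ->.
  - have hI : Z :&: S \subset W.
      apply/subsetP => y; rewrite inE => /andP[yZ yS].
      move/subsetP: SW => /(_ y yS); rewrite !inE; case/orP => [/eqP yc|//].
      subst y; move/subsetP: ZW => /(_ c yZ); rewrite !inE.
      case/orP => [//|]; by rewrite eqxx.
    have gI := good_all gW hI.
    have sub := N_submod Z S.
    have hc := cardsUI Z S.
    have sub' : (N (Z :|: S))%:R + (N (Z :&: S))%:R <= (N Z)%:R + (N S)%:R :> R.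
      by rewrite -!natrD ler_nat.
    have hc' : x * #|Z :|: S|%:R + x * #|Z :&: S|%:R = x * #|Z|%:R + x * #|S|%:R.
      by rewrite -!mulrDr -!natrD hc.
    lra.
have D0 : D != set0.
  rewrite -card_gt0; have := cardsID W Ws; rewrite -/D.
  have := subset_leq_card (subsetIl W Ws); rewrite setIC; lia.
have [Z [ZW DZ HZ]] := claim _ D erefl (subxx _) D0.
set Y := Z :&: Ws.
have DY : D \subset Y by rewrite subsetI DZ subsetDl.
have Y0 : Y != set0 by rewrite -card_gt0; apply: leq_trans (subset_leq_card DY); rewrite card_gt0.
have hY := gWs Y (subsetIr _ _) Y0.
have NYZ : (N Y <= N Z)%N by apply: N_mono; exact: subsetIl.
have hZD : Z :\: Ws \subset W :\: Ws.
  apply/subsetP => y; rewrite !inE => /andP[yWs yZ]; rewrite yWs /=.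
  move/subsetP: ZW => /(_ y yZ); rewrite !inE; case/orP => // /andP[]; by rewrite (negbTE yWs).
have c1 := cardsID Ws Z.
have c2 := cardsID Ws W.
have c3 := cardsID W Ws.
have c4 := subset_leq_card hZD.
have c5 := subset_leq_card DY.
have cZ : (#|Z| <= 2 * #|Y|)%N by rewrite /Y /D in c5 *; rewrite setIC in c3; lia.
have : x * #|Z|%:R <= (N Z)%:R.
  apply: le_trans (_ : 2 * x * #|Y|%:R <= _); last first.
    by apply: le_trans hY _; rewrite ler_nat.
  have hz : #|Z|%:R <= 2 * #|Y|%:R :> R by rewrite -natrM ler_nat.
  by have := ler_wpM2l x0 hz; rewrite mulrA [x * 2]mulrC.
by rewrite leNgt HZ.
Qed.


Lemma afford_good k W : (0 < n)%N -> (0 < k)%N -> affordable R A k W ->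
  good (n%:R / k%:R) W.
Proof.
move=> n0 k0 [p [p0 pA pk pW _]] S SW S0.
have e1 : #|S|%:R = \sum_(i < n) \sum_(c in S) p i c :> R.
  rewrite exchange_big /= (eq_bigr (fun _ => 1)); first by rewrite sumr_const.
  by move=> c cS; apply: pW; move/subsetP: SW; apply.
have e2 : \sum_(i < n) \sum_(c in S) p i c <= (N S)%:R * (k%:R / n%:R).
  rewrite (bigID (fun i => i \in [set i | ~~ [disjoint A i & S]])) /=.
  rewrite [X in _ + X]big1 ?addr0; last first.
    move=> i; rewrite inE negbK => dis; apply: big1 => c cS; apply: pA.
    by apply: contraTN dis => cA; rewrite -setI_eq0; apply/set0Pn; exists c; rewrite inE cA.
  rewrite /napprovers mulr_natl -sumr_const; apply: ler_sum => i _.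
  apply: le_trans (pk i); rewrite [X in _ <= X](bigID (fun c => c \in S)) /=.
  by rewrite lerDl; apply: sumr_ge0 => c _; exact: p0.
have hn : (0 < n%:R :> R) by rewrite ltr0n.
have hk : (0 < k%:R :> R) by rewrite ltr0n.
have : n%:R / k%:R * #|S|%:R <= n%:R / k%:R * ((N S)%:R * (k%:R / n%:R)) :> R.
  by apply: ler_wpM2l; [rewrite divr_ge0 // ltW | rewrite e1].
have -> : n%:R / k%:R * ((N S)%:R * (k%:R / n%:R)) = (N S)%:R :> R.
  by field; apply/andP; split; rewrite gt_eqF.
by rewrite mulrC.
Qed.

Lemma supp_le_nk (Ws : {set C}) k : #|Ws| = k -> (0 < k)%N ->
  supp R A Ws <= n%:R / k%:R.
Proof.
move=> cW k0; have W0 : Ws != set0 by rewrite -card_gt0 cW.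
have := supp_good W0 (subxx _) W0; rewrite cW => h.
rewrite ler_pdivlMr ?ltr0n //; apply: le_trans h _; rewrite ler_nat; exact: N_le_n.
Qed.

Lemma compl_good x k W Wb : completion R A k W Wb -> good x W ->
  (forall W0 : {set C}, (#|W0| < k)%N -> good x W0 -> exists c, c \notin W0 /\ good x (c |: W0)) ->
  good x Wb /\ #|Wb| = k.
Proof.
elim=> [W0 hk | W0 c Wb' lt cW hmax _ IH] gW hstep; first by [].
apply: IH => //.
have [c' [c'W g']] := hstep W0 lt gW.
have ne : forall d, d |: W0 != set0 by move=> d; apply/set0Pn; exists d; rewrite setU11.
have h1 := good_supp (ne c') g'.
have h2 := le_trans h1 (hmax c' c'W).
exact: good_mono h2 (supp_good (ne c)).
Qed.

End Aux.

Theorem theorem8 (R : realFieldType) (C : finType) (n : nat)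
    (A : 'I_n -> {set C}) (k : nat) (W Wbar : {set C}) :
  (0 < n)%N -> (1 <= k)%N -> (k <= #|C|)%N ->
  (#|W| <= k)%N ->
  affordable R A k W ->
  completion R A k W Wbar ->
  max_supp R A k / 2 <= supp R A Wbar.
Proof.
move=> n0 k1 kC WK aff comp.
rewrite ler_pdivrMr ?ltr0n //; rewrite /max_supp; apply: bigmax_le.
  by rewrite mulr_ge0 ?supp_ge0 ?ler0n.
move=> Ws /eqP cWs.
set t := supp R A Ws.
have t0 : 0 <= t by exact: supp_ge0.
have Ws0 : Ws != set0 by rewrite -card_gt0 cWs.
set x := t / 2.
have x0 : 0 <= x by rewrite divr_ge0.
have g2 : good A (2 * x) Ws.
  have -> : 2 * x = t by rewrite /x; field.
  exact: supp_good.
have tnk := supp_le_nk R A cWs k1.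
have gW : good A x W.
  apply: good_mono (afford_good n0 k1 aff); apply: le_trans tnk; rewrite /x ler_pdivrMr ?ltr0n // -/t; lra.
have hst : forall W0 : {set C}, (#|W0| < k)%N -> good A x W0 ->
    exists c, c \notin W0 /\ good A x (c |: W0).
  by move=> W0 lt g; apply: step x0 g2 g _; rewrite cWs.
have [gWb cWb] := compl_good comp gW hst.
have Wb0 : Wbar != set0 by rewrite -card_gt0 cWb.
have := good_supp Wb0 gWb; rewrite /x -/t; lra.
Qed.
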